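(* In dimension $d=1$, every Poisson hard sphere process almost surely does not percolate.
   Context: A sphere process is a simple point process $\Lambda$ on $\mathbb{R}^d\times[0,\infty)$; its support is $[\Lambda]=\{(x,r):\Lambda(\{(x,r)\})=1\}$, and $(x,r)\in[\Lambda]$ means there is a sphere (closed ball) of radius $r\ge0$ centred at $x$. The centre process is $\widetilde\Lambda(\cdot)=\Lambda(\cdot\times[0,\infty))$; $\Lambda$ is a Poisson sphere process if $\widetilde\Lambda$ is a homogeneous Poisson process. $\Lambda$ is a hard sphere process if almost surely $|x-y|\ge r+s$ for all distinct $(x,r),(y,s)\in[\Lambda]$. Let $G(\Lambda)=\{y:|y-x|\le r\text{ for some }(x,r)\in[\Lambda]\}$; its connected components are clusters, and $\Lambda$ percolates if some cluster is unbounded. *)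

(* Defs.v *)
(* Sphere processes in dimension d = 1:
   a sphere (closed ball) of radius r >= 0 centred at x in R is a pair (x, r). *)
From HB Require Import structures.
From mathcomp Require Import all_boot all_order all_algebra.
From mathcomp Require Import all_classical all_reals all_analysis.
Set Implicit Arguments. Unset Strict Implicit. Unset Printing Implicit Defensive.
Import Order.TTheory GRing.Theory Num.Theory.
Import numFieldNormedType.Exports.
Local Open Scope classical_set_scope.
Local Open Scope ring_scope.

Section SphereProcess.
Context {R : realType} {dT : measure_display} {T : measurableType dT}.

Definition has_n_points (U : Type) (A : set U) (n : nat) : Prop := (A #= `I_n)%card.

(* Bounded subsets of R x R (product norm) are those of [bounded_set]. *)

Definition sphere_process (Lam : T -> set (R * R)) : Prop :=
  [/\ forall w, Lam w `<=` [set p | 0 <= p.2],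
      forall w (B : set (R * R)), bounded_set B -> finite_set (Lam w `&` B) &
      forall (B : set (R * R)) (n : nat), measurable B -> bounded_set B ->
        measurable [set w | has_n_points (Lam w `&` B) n]].

Definition centre_pts (Lam : T -> set (R * R)) (w : T) (B : set R) : set (R * R) :=
  Lam w `&` (B `*` [set r | 0 <= r]).

Definition leb (B : set R) : R := fine (lebesgue_measure B).

Definition homogeneous_Poisson_centres (P : probability T R)
    (Lam : T -> set (R * R)) : Prop :=
  exists lam : R, 0 < lam /\
  [/\ forall w (B : set R), bounded_set B -> finite_set (centre_pts Lam w B),
      forall (B : set R) (n : nat), measurable B -> bounded_set B ->
        measurable [set w | has_n_points (centre_pts Lam w B) n] &
      forall (k : nat) (B : 'I_k -> set R) (n : 'I_k -> nat),
        (forall i, measurable (B i)) -> (forall i, bounded_set (B i)) ->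
        (forall i j, i != j -> B i `&` B j = set0) ->
        P [set w | forall i, has_n_points (centre_pts Lam w (B i)) (n i)] =
        (\prod_(i < k) (expR (- (lam * leb (B i))) *
                        (lam * leb (B i)) ^+ n i / (n i)`!%:R))%:E].

Definition Poisson_sphere_process (P : probability T R)
    (Lam : T -> set (R * R)) : Prop :=
  sphere_process Lam /\ homogeneous_Poisson_centres P Lam.

Definition hard_sphere_process (P : probability T R)
    (Lam : T -> set (R * R)) : Prop :=
  sphere_process Lam /\
  {ae P, forall w, forall p q, Lam w p -> Lam w q -> p <> q ->
                     p.2 + q.2 <= `|p.1 - q.1|}.

End SphereProcess.

Definition covered {R : realType} (S : set (R * R)) : set R :=
  [set y | exists2 p, S p & `|y - p.1| <= p.2].

Definition percolates {R : realType} (S : set (R * R)) : Prop :=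
  exists2 y, covered S y & ~ bounded_set (connected_component (covered S) y).

(* Main.v *)
Require Import Defs.
From HB Require Import structures.
From mathcomp Require Import all_boot all_order all_algebra.
From mathcomp Require Import all_classical all_reals all_analysis.
Import Order.TTheory GRing.Theory Num.Theory.
Import numFieldNormedType.Exports.
Local Open Scope classical_set_scope.
Local Open Scope ring_scope.
Lemma bnd_sub (R : realType) (A : set R) (M : R) :
  A `<=` [set x | `|x| <= M] -> bounded_set A.
Proof.
move=> AM; rewrite /= /bounded_near; near=> M' => x /AM /= h.
apply: (le_trans h); near: M'; apply: nbhs_pinfty_ge; exact: num_real.
Unshelve. all: by end_near. Qed.

Lemma zero_pts (U : Type) (A : set U) : has_n_points A 0 -> A = set0.
Proof. by rewrite /has_n_points II0 card_eq0 => /eqP. Qed.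

Lemma two_pts (U : pointedType) (A : set U) : has_n_points A 2 ->
  exists a b, [/\ A a, A b, a <> b & forall c, A c -> c = a \/ c = b].
Proof.
rewrite /has_n_points card_eq_sym => /card_set_bijP [f [ff fi fs]].
exists (f 0%N), (f 1%N); split.
- by apply: ff.
- by apply: ff.
- by move=> /fi; rewrite !inE /= => /(_ isT isT).
- move=> c /fs [[|[|k]]] /= hk <-; by [left|right|].
Qed.
From mathcomp Require Import ring lra.
Section G.
Variable R : realType.
Variable S : set (R * R).
Hypothesis hard : forall p q, S p -> S q -> p <> q -> p.2 + q.2 <= `|p.1 - q.1|.

Lemma left_block (p c : R * R) (m : R) : S p -> 0 <= p.2 -> p.2 < m - p.1 ->
  S c -> c.1 <= p.1 -> `|m - c.1| <= c.2 -> False.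
Proof.
move=> Sp p2 pm Sc cp cm.
have mc : 0 <= m - c.1 by lra.
rewrite ger0_norm // in cm.
have [cpe|ne] := eqVneq c p; first by subst c; lra.
have := hard _ _ Sc Sp (elimN eqP ne).
rewrite distrC ger0_norm; last by lra.
lra.
Qed.

Lemma right_block (q c : R * R) (m : R) : S q -> 0 <= q.2 -> q.2 < q.1 - m ->
  S c -> q.1 <= c.1 -> `|m - c.1| <= c.2 -> False.
Proof.
move=> Sq q2 qm Sc cq cm.
have mc : m - c.1 <= 0 by lra.
rewrite ler0_norm // in cm.
have [cqe|ne] := eqVneq c q; first by subst c; lra.
have := hard _ _ Sc Sq (elimN eqP ne).
rewrite ger0_norm; last by lra.
lra.
Qed.
End G.
Lemma geom_small (R : realType) (s v : R) : 0 <= s < 1 ->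
  (forall m : nat, v <= s ^+ m) -> v <= 0.
Proof.
move=> /andP[s0 s1] hv.
set p := 1 - s.
have p0 : 0 < p by rewrite /p; lra.
have key m : (1 + m%:R * p) * s ^+ m <= 1.
  elim: m => [|m IH]; first by rewrite expr0; lra.
  rewrite exprS -natr1.
  have sm : 0 <= s ^+ m by apply: exprn_ge0.
  have m0 : (0 : R) <= m%:R by [].
  have e : s = 1 - p by rewrite /p; lra.
  rewrite e in sm IH *.
  have : 0 <= (m%:R + 1) * (p * p) * (1 - p) ^+ m.
    by apply: mulr_ge0 => //; apply: mulr_ge0; [lra|nra].
  nra.
rewrite leNgt; apply/negP => v0.
have hpv : 0 < v * p by apply: mulr_gt0.
have hi : 0 <= (v * p)^-1 by rewrite invr_ge0 ltW.
have /archi_boundP := hi; set m := Num.bound _ => hm.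
have := key m; have := hv m.
have sm : 0 <= s ^+ m by apply: exprn_ge0.
move=> h1 h2.
have : v * (1 + m%:R * p) <= 1.
  apply: le_trans h2; rewrite mulrC; apply: ler_wpM2l => //.
  by apply: addr_ge0 => //; apply: mulr_ge0 => //; apply: ltW.
have : (v * p)^-1 * (v * p) = 1 by rewrite mulVf // gt_eqF.
nra.
Qed.
Definition ival {R : realType} (a b : R) : set R := [set` `[a, b[%R].
Definition A1 {R : realType} (x : R) := ival x (x + 8^-1).
Definition A2 {R : realType} (x : R) := ival (x + 8^-1) (x + 7/8).
Definition A3 {R : realType} (x : R) := ival (x + 7/8) (x + 1).
Definition cp {R : realType} (S : set (R * R)) (B : set R) :=
  S `&` (B `*` [set r | 0 <= r]).
Definition pat {R : realType} (S : set (R * R)) (x : R) :=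
  [/\ has_n_points (cp S (A1 x)) 2, has_n_points (cp S (A2 x)) 0 &
      has_n_points (cp S (A3 x)) 2].

Lemma uncovered (R : realType) (S : set (R * R)) (x : R) :
  (forall p q, S p -> S q -> p <> q -> p.2 + q.2 <= `|p.1 - q.1|) ->
  pat S x -> ~ covered S (x + 2^-1).
Proof.
move=> hard [h1 h2 h3] [c Sc cm].
have c2 : 0 <= c.2 by apply: le_trans cm.
have [a [b [[Sa [/= a1 a2]] [Sb [/= b1 b2]] ab ab']]] := two_pts _ _ h1.
have [a' [b' [[Sa' [/= a1' a2']] [Sb' [/= b1' b2']] ab2 ab2']]] := two_pts _ _ h3.
move: a1 b1 a1' b1'; rewrite /A1 /A3 /ival /= !in_itv /= => /andP[a1 a1'] /andP[b1 b1'] /andP[c1 c1'] /andP[d1 d1'].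
have hab := hard _ _ Sa Sb ab.
have hab2 := hard _ _ Sa' Sb' ab2.
have [cl|cr] := ltP c.1 (x + 8^-1).
-
  wlog le_ab : a b Sa Sb a2 b2 ab ab' a1 a1' b1 b1' hab / a.1 <= b.1.
    move=> W; have [|] := leP a.1 b.1; first by move=> h; apply: (W a b).
    move=> /ltW h; apply: (W b a) => //.
    - by move=> e; apply: ab.
    - by move=> d /ab' [] ->; [right|left].
    - by rewrite addrC distrC.
  apply: (@left_block R S hard b c (x + 2^-1)) => //.
  + move: hab; rewrite distrC ger0_norm; lra.
  + have [cx|cx] := ltP c.1 x; first by lra.
    have : cp S (A1 x) c by split=> //; rewrite /A1 /ival /= in_itv /= cx cl.
    by move=> /ab' [] ->.
- have [cl2|cr2] := ltP c.1 (x + 7/8).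
  + have : cp S (A2 x) c.
      by split=> //; rewrite /A2 /ival /= in_itv /= cr cl2.
    by rewrite (zero_pts _ _ h2).
  + wlog le_ab : a' b' Sa' Sb' a2' b2' ab2 ab2' c1 c1' d1 d1' hab2 / a'.1 <= b'.1.
      move=> W; have [|] := leP a'.1 b'.1; first by move=> h; apply: (W a' b').
      move=> /ltW h; apply: (W b' a') => //.
      - by move=> e; apply: ab2.
      - by move=> d /ab2' [] ->; [right|left].
      - by rewrite addrC distrC.
    apply: (@right_block R S hard a' c (x + 2^-1)) => //.
    * move: hab2; rewrite distrC ger0_norm; lra.
    * have [cx|cx] := ltP c.1 (x + 1); last by lra.
      have : cp S (A3 x) c by split=> //; rewrite /A3 /ival /= in_itv /= cx cr2.
      by move=> /ab2' [] ->.
Qed.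
Lemma no_perc {R : realType} (S : set (R * R)) :
  (forall p q, S p -> S q -> p <> q -> p.2 + q.2 <= `|p.1 - q.1|) ->
  (forall N : nat, exists j : nat, (N <= j)%N /\ pat S (2 * j%:R)) ->
  (forall N : nat, exists j : nat, (N <= j)%N /\ pat S (- (2 * j%:R) - 2)) ->
  ~ percolates S.
Proof.
move=> hard hR hL [y cy unb].
have /archi_boundP := normr_ge0 y; set N := Num.bound _ => yN.
have [j [Nj pj]] := hR N.
have [k [Nk pk]] := hL N.
have uj := @uncovered _ _ _ hard pj.
have uk := @uncovered _ _ _ hard pk.
have Nj' : (N%:R : R) <= j%:R by rewrite ler_nat.
have Nk' : (N%:R : R) <= k%:R by rewrite ler_nat.
have yb : - `|y| <= y <= `|y| by rewrite -ler_norml.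
move/andP: yb => [yb1 yb2].
set C := connected_component (covered S) y.
have Cy : C y by apply: connected_component_refl.
have iC : is_interval C by apply/connected_intervalP; apply: component_connected.
have CS : C `<=` covered S by apply: connected_component_sub.
apply: unb; apply: (@bnd_sub _ _ (2 * j%:R + 2 * k%:R + 2)).
move=> z Cz /=.
have z1 : z < 2 * j%:R + 2^-1.
  rewrite ltNge; apply/negP => hz; apply: uj; apply: CS.
  apply: (iC y z Cy Cz); apply/andP; split => //; lra.
have z2 : - (2 * k%:R) - 2 + 2^-1 < z.
  rewrite ltNge; apply/negP => hz; apply: uk; apply: CS.
  apply: (iC z y Cz Cy); apply/andP; split => //; lra.
have j0 : (0 : R) <= j%:R by [].
have k0 : (0 : R) <= k%:R by [].
rewrite ler_norml; apply/andP; split; lra.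
Qed.
Lemma leb_ival {R : realType} (a b : R) : a < b -> leb (ival a b) = b - a.
Proof.
by move=> ab; rewrite /leb /ival lebesgue_measure_itv /= lte_fin ab /=.
Qed.

Definition part {R : realType} (r : nat) (x : R) : set R :=
  if r == 0%N then A1 x else if r == 1%N then A2 x else A3 x.
Definition lo {R : realType} (r : nat) : R :=
  if r == 0%N then 0 else if r == 1%N then 8^-1 else 7/8.
Definition hi {R : realType} (r : nat) : R :=
  if r == 0%N then 8^-1 else if r == 1%N then 7/8 else 1.
Definition len {R : realType} (r : nat) : R := hi r - lo r.

Lemma part_sub {R : realType} r (x y : R) : part r x y -> x + lo r <= y < x + hi r.
Proof.
rewrite /part /lo /hi /A1 /A2 /A3 /ival /=.
by case: ifP => _ /=; [|case: ifP => _ /=]; rewrite in_itv /= ?addr0.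
Qed.

Lemma leb_part {R : realType} r (x : R) : leb (part r x) = len r.
Proof.
rewrite /part /len /lo /hi /A1 /A2 /A3.
case: ifP => _; [|case: ifP => _]; rewrite leb_ival; try lra.
Qed.

Lemma part_meas {R : realType} r (x : R) : measurable (part r x).
Proof.
rewrite /part /A1 /A2 /A3 /ival.
by case: ifP => _; [|case: ifP => _]; apply: measurable_itv.
Qed.

Lemma part_bnd {R : realType} r (x : R) : bounded_set (part r x).
Proof.
apply: (@bnd_sub _ _ (`|x| + 1)) => y /part_sub.
rewrite /lo /hi => /andP[h1 h2].
have hx : - `|x| <= x <= `|x| by rewrite -ler_norml.
move/andP: hx => [hx1 hx2].
rewrite /= ler_norml; move: h1 h2; case: r => [|[|r]] /= h1 h2; apply/andP; split; lra.
Qed.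
Definition nn (r : nat) : nat := if r == 1%N then 0%N else 2%N.

Definition Bk {R : realType} (g : nat -> R) (i : nat) : set R := part (i %% 3)%N%N (g (i %/ 3)%N%N).

Definition sep {R : realType} (g : nat -> R) (m : nat) :=
  forall u v, (u < m)%N -> (v < m)%N -> u != v -> 1 <= `|g u - g v|.

Lemma Bk_disj {R : realType} (g : nat -> R) m (i j : nat) : sep g m ->
  (i < 3 * m)%N -> (j < 3 * m)%N -> i != j -> Bk g i `&` Bk g j = set0.
Proof.
move=> hs im jm ij; apply/seteqP; split => // y [/part_sub hi' /part_sub hj'].
have i3 : (i %/ 3 < m)%N by rewrite ltn_divLR // mulnC.
have j3 : (j %/ 3 < m)%N by rewrite ltn_divLR // mulnC.
have [e|ne] := eqVneq (i %/ 3)%N (j %/ 3)%N.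
- have r : (i %% 3 != j %% 3)%N.
    apply: contra ij => /eqP e2; apply/eqP.
    by rewrite (divn_eq i 3) (divn_eq j 3) e e2.
  move: hi' hj' r; rewrite e; clear e.
  have : (i %% 3 < 3)%N by rewrite ltn_mod.
  have : (j %% 3 < 3)%N by rewrite ltn_mod.
  case: (i %% 3)%N => [|[|[|?]]] //; case: (j %% 3)%N => [|[|[|?]]] //= _ _;
    rewrite /lo /hi /= => /andP[? ?] /andP[? ?] _; lra.
- have := hs _ _ i3 j3 ne.
  have lo0 (r : nat) : (0 : R) <= lo r.
    by rewrite /lo; case: ifP => _; [|case: ifP => _]; lra.
  have hi1 (r : nat) : hi r <= (1 : R).
    by rewrite /hi; case: ifP => _; [|case: ifP => _]; lra.
  move: hi' hj' (lo0 (i %% 3)%N) (lo0 (j %% 3)%N) (hi1 (i %% 3)%N) (hi1 (j %% 3)%N).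
  move=> /andP[? ?] /andP[? ?] ? ? ? ?.
  have [ab|ab] := leP (g (i %/ 3)%N) (g (j %/ 3)%N).
    by rewrite distrC ger0_norm; lra.
  by rewrite ger0_norm; lra.
Qed.
Section prob.
Context (R : realType) (dT : measure_display) (T : measurableType dT)
  (P : probability T R) (Lam : T -> set (R * R)) (lam : R).
Hypothesis lam0 : 0 < lam.
Hypothesis Hm : forall (B : set R) (n : nat), measurable B -> bounded_set B ->
        measurable [set w | has_n_points (centre_pts Lam w B) n].
Hypothesis HJ : forall (k : nat) (B : 'I_k -> set R) (n : 'I_k -> nat),
        (forall i, measurable (B i)) -> (forall i, bounded_set (B i)) ->
        (forall i j, i != j -> B i `&` B j = set0) ->
        P [set w | forall i, has_n_points (centre_pts Lam w (B i)) (n i)] =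
        (\prod_(i < k) (expR (- (lam * leb (B i))) *
                        (lam * leb (B i)) ^+ n i / (n i)`!%:R))%:E.

Definition tr (r : nat) : R :=
  expR (- (lam * len r)) * (lam * len r) ^+ nn r / (nn r)`!%:R.
Definition pc : R := tr 0 * tr 1 * tr 2.

Lemma prod_tr m : \prod_(i < 3 * m) tr (i %% 3)%N = pc ^+ m.
Proof.
rewrite -(big_mkord xpredT (fun i => tr (i %% 3)%N)).
elim: m => [|m IH]; first by rewrite muln0 big_geq // expr0.
have -> : (3 * m.+1 = (3 * m).+1.+1.+1)%N by rewrite mulnS addnC addn3.
rewrite !big_nat_recr //= IH exprS.
have h0 : ((3 * m) %% 3 = 0)%N by rewrite mulnC modnMl.
have h1 : ((3 * m).+1 %% 3 = 1)%N by rewrite -addn1 mulnC modnMDl.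
have h2 : ((3 * m).+2 %% 3 = 2)%N by rewrite -addn2 mulnC modnMDl.
rewrite h0 h1 h2 /pc; ring.
Qed.

Lemma divmod3 (j r : nat) : (r < 3)%N -> ((3 * j + r) %/ 3 = j)%N /\ ((3 * j + r) %% 3 = r)%N.
Proof.
move=> r3; split; last by rewrite mulnC modnMDl modn_small.
by rewrite mulnC divnMDl // divn_small // addn0.
Qed.

Lemma ev_eq (g : nat -> R) m :
  [set w | forall i : 'I_(3 * m), has_n_points (centre_pts Lam w (Bk g i)) (nn (i %% 3)%N)] =
  [set w | forall j, (j < m)%N -> pat (Lam w) (g j)].
Proof.
apply/seteqP; split => w /= H.
- move=> j jm.
  have lt r : (r < 3)%N -> (3 * j + r < 3 * m)%N.
    move=> r3; apply: (@leq_trans (3 * j + 3)%N); first by rewrite ltn_add2l.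
    by rewrite -mulnSr leq_pmul2l.
  have E r (r3 : (r < 3)%N) := H (Ordinal (lt r r3)).
  have [d0 m0] := divmod3 j 0%N isT.
  have [d1 m1] := divmod3 j 1%N isT.
  have [d2 m2] := divmod3 j 2%N isT.
  move: (E 0%N isT) (E 1%N isT) (E 2%N isT); rewrite /Bk /= d0 m0 d1 m1 d2 m2.
  by rewrite /part /nn /=.
- move=> i; rewrite /Bk.
  have jm : (i %/ 3 < m)%N by rewrite ltn_divLR // [(m * 3)%N]mulnC.
  have [p1 p2 p3] := H _ jm.
  have : (i %% 3 < 3)%N by rewrite ltn_mod.
  by case: (i %% 3)%N => [|[|[|?]]] //= _; rewrite /part /nn /=.
Qed.

Lemma joint (g : nat -> R) m : sep g m ->
  P [set w | forall j, (j < m)%N -> pat (Lam w) (g j)] = (pc ^+ m)%:E.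
Proof.
move=> hs; rewrite -ev_eq.
rewrite (HJ (3 * m)%N (fun i : 'I_(3 * m) => Bk g i) (fun i : 'I_(3 * m) => nn (i %% 3)%N)).
- congr (_%:E); rewrite -prod_tr; apply: eq_bigr => i _.
  by rewrite /Bk leb_part.
- by move=> i; apply: part_meas.
- by move=> i; apply: part_bnd.
- by move=> i j ij; apply: (Bk_disj g m i j hs (ltn_ord i) (ltn_ord j)).
Qed.
Lemma pat_meas (x : R) : measurable [set w | pat (Lam w) x].
Proof.
have -> : [set w | pat (Lam w) x] =
  [set w | has_n_points (centre_pts Lam w (A1 x)) 2] `&`
  [set w | has_n_points (centre_pts Lam w (A2 x)) 0] `&`
  [set w | has_n_points (centre_pts Lam w (A3 x)) 2].
  by apply/seteqP; split => w /=; [case|move=> [[]]].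
apply: measurableI; first apply: measurableI.
- by apply: Hm; [apply: (part_meas 0)|apply: (part_bnd 0)].
- by apply: Hm; [apply: (part_meas 1)|apply: (part_bnd 1)].
- by apply: Hm; [apply: (part_meas 2)|apply: (part_bnd 2)].
Qed.

Definition Pos (G : nat -> R) (t : seq nat) :=
  [set w | forall x, x \in t -> pat (Lam w) (G x)].
Definition Neg (G : nat -> R) (m : nat) :=
  [set w | forall j, (j < m)%N -> ~ pat (Lam w) (G j)].

Lemma Pos_meas G t : measurable (Pos G t).
Proof.
elim: t => [|x t IH].
  by have -> : Pos G [::] = setT by apply/seteqP; split => // w _ x.
have -> : Pos G (x :: t) = [set w | pat (Lam w) (G x)] `&` Pos G t.
  apply/seteqP; split => w /=.
  - move=> h; split; first by apply: h; rewrite inE eqxx.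
    by move=> y yt; apply: h; rewrite inE yt orbT.
  - by move=> [h1 h2] y; rewrite inE => /orP [/eqP ->|/h2].
by apply: measurableI => //; apply: pat_meas.
Qed.

Lemma Neg_meas G m : measurable (Neg G m).
Proof.
elim: m => [|m IH].
  by have -> : Neg G 0 = setT by apply/seteqP; split => // w _ x.
have -> : Neg G m.+1 = Neg G m `&` ~` [set w | pat (Lam w) (G m)].
  apply/seteqP; split => w /=.
  - move=> h; split; first by move=> j jm; apply: h; apply: ltnW.
    by apply: h.
  - move=> [h1 h2] j; rewrite ltnS leq_eqVlt => /orP [/eqP ->|/h1] //.
by apply: measurableI => //; apply: measurableC; apply: pat_meas.
Qed.

Lemma incl_excl G : (forall u v, u != v -> 1 <= `|G u - G v|) ->
  forall m t, uniq t -> all (fun x => m <= x)%N t ->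
  P (Pos G t `&` Neg G m) = (pc ^+ size t * (1 - pc) ^+ m)%:E.
Proof.
move=> sG; elim=> [|m IH] t ut ht.
- have -> : Pos G t `&` Neg G 0 = [set w | forall j, (j < size t)%N -> pat (Lam w) (G (nth 0%N t j))].
    apply/seteqP; split => w /=.
    + by move=> [h _] j jt; apply: h; apply: mem_nth.
    + move=> h; split => // x /(nthP 0%N) [j jt <-]; exact: h.
  rewrite (joint (fun j => G (nth 0%N t j))) ?expr0 ?mulr1 //.
  move=> u v ut' vt uv; apply: sG.
  by rewrite nth_uniq.
- have mt : m \notin t.
    apply/negP => mt; move/allP: ht => /(_ _ mt); by rewrite ltnn.
  have E : Pos G t `&` Neg G m.+1 =
      (Pos G t `&` Neg G m) `\` (Pos G (m :: t) `&` Neg G m).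
    apply/seteqP; split => w /=.
    + move=> [h1 h2]; split.
        by split => // j jm; apply: h2; apply: ltnW.
      by move=> [h3 _]; apply: (h2 m) => //; apply: h3; rewrite inE eqxx.
    + move=> [[h1 h2] h3]; split => // j; rewrite ltnS leq_eqVlt => /orP [/eqP ->|/h2] //.
      move=> hm; apply: h3; split => //.
      by move=> x; rewrite inE => /orP [/eqP ->|/h1].
  have ht' : all (fun x => m <= x)%N t.
    by apply/allP => x /(allP ht) /ltnW.
  have ut2 : uniq (m :: t) by rewrite /= mt ut.
  have ht2 : all (fun x => m <= x)%N (m :: t) by rewrite /= leqnn ht'.
  rewrite E measureD; last first.
  - apply: (le_lt_trans (probability_le1 _ _)); last exact: ltry.
    by apply: measurableI; [apply: Pos_meas|apply: Neg_meas].
  - by apply: measurableI; [apply: Pos_meas|apply: Neg_meas].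
  - by apply: measurableI; [apply: Pos_meas|apply: Neg_meas].
  have -> : (Pos G t `&` Neg G m) `&` (Pos G (m :: t) `&` Neg G m) = Pos G (m :: t) `&` Neg G m.
    apply/seteqP; split => w /=; first by case.
    move=> [h1 h2]; split => //; split => // x xt; apply: h1.
    by rewrite inE xt orbT.
  transitivity ((pc ^+ size t * (1 - pc) ^+ m)%:E -
     (pc ^+ size (m :: t) * (1 - pc) ^+ m)%:E)%E.
    by congr (_ - _)%E; [exact: (IH t ut ht')|exact: (IH _ ut2 ht2)].
  rewrite /= -EFinB; congr (_%:E).
  rewrite (exprS pc) (exprS (1 - pc)).
  move: (pc ^+ size t) ((1 - pc) ^+ m) => a b; ring.
Qed.
Lemma tr_gt0 r : (r < 3)%N -> 0 < tr r.
Proof.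
move=> r3; rewrite /tr; apply: mulr_gt0; first apply: mulr_gt0.
- exact: expR_gt0.
- apply: exprn_gt0; apply: mulr_gt0 => //.
  by move: r3; rewrite /len /lo /hi; case: r => [|[|[|]]] //= _; lra.
- by rewrite invr_gt0 ltr0n fact_gt0.
Qed.

Lemma pc_gt0 : 0 < pc.
Proof. by rewrite /pc; apply: mulr_gt0; [apply: mulr_gt0|]; apply: tr_gt0. Qed.

Lemma tail_null G : (forall u v, u != v -> 1 <= `|G u - G v|) ->
  forall N, P.-negligible [set w | forall j, ~ pat (Lam w) (G (N + j)%N)].
Proof.
move=> sG N.
set G' := fun j => G (N + j)%N.
have sG' : forall u v, u != v -> 1 <= `|G' u - G' v|.
  by move=> u v uv; apply: sG; rewrite eqn_add2l.
have IE := incl_excl G' sG'.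
have PosT : Pos G' [::] = setT by apply/seteqP; split => // w _ x.
have pc1 : pc <= 1.
  have := IE 0%N [:: 0%N] isT isT.
  rewrite /= expr1 expr0 mulr1 => h.
  rewrite -lee_fin -h; apply: probability_le1.
  by apply: measurableI; [apply: Pos_meas|apply: Neg_meas].
have hN m : P (Neg G' m) = ((1 - pc) ^+ m)%:E.
  have := IE m [::] isT isT; rewrite PosT setTI /= expr0 mul1r.
  by [].
set X := \bigcap_m Neg G' m.
have mX : measurable X by apply: bigcapT_measurable => m; apply: Neg_meas.
exists X; split => //; last first.
  by move=> w /= h m _ j jm; apply: h.
have h1 : forall m : nat, (P X <= ((1 - pc) ^+ m)%:E)%E.
  move=> m; rewrite -hN; apply: le_measure; rewrite ?inE //.
    exact: Neg_meas.
  by move=> w; apply; rewrite /=.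
have h0 : (0 <= P X)%E by apply: measure_ge0.
move: h0 h1; case: (P X) => [r| |] //= h0 h1.
- congr (_%:E); apply/eqP; rewrite eq_le; apply/andP; split; last by rewrite -lee_fin.
  apply: (@geom_small _ (1 - pc)); first by have p0 := pc_gt0; apply/andP; split; lra.
  by move=> m; rewrite -lee_fin; apply: h1.
- by have := h1 0%N.
Qed.
End prob.
Lemma sep_nat (R : realType) (u v : nat) : u != v ->
  (1 : R) <= `|u%:R - v%:R| /\ (1 : R) <= `|v%:R - u%:R|.
Proof.
rewrite neq_ltn => /orP [] h.
- have : (u%:R + 1 : R) <= v%:R by rewrite natr1 ler_nat.
  move=> h'; split; [rewrite distrC|]; rewrite ger0_norm; lra.
- have : (v%:R + 1 : R) <= u%:R by rewrite natr1 ler_nat.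
  move=> h'; split; [|rewrite distrC]; rewrite ger0_norm; lra.
Qed.

Lemma sepR (R : realType) : forall u v : nat, u != v ->
  (1 : R) <= `|2 * u%:R - 2 * v%:R|.
Proof.
move=> u v /(sep_nat R) [h _].
rewrite -mulrBr normrM ger0_norm //; lra.
Qed.

Lemma sepL (R : realType) : forall u v : nat, u != v ->
  (1 : R) <= `|(- (2 * u%:R) - 2) - (- (2 * v%:R) - 2)|.
Proof.
move=> u v /(sep_nat R) [_ h].
have -> : (- (2 * u%:R) - 2) - (- (2 * v%:R) - 2) = 2 * (v%:R - u%:R :> R) by ring.
rewrite normrM ger0_norm //; lra.
Qed.

Theorem mainTheorem4 (R : realType) (dT : measure_display) (T : measurableType dT)
  (P : probability T R) (Lam : T -> set (R * R)) :
  Poisson_sphere_process P Lam -> hard_sphere_process P Lam ->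
  {ae P, forall w, ~ percolates (Lam w)}.
Proof.
move=> [_ [lam [lam0 [_ Hm HJ]]]] [_ Hhard].
have tail G (sG : forall u v : nat, u != v -> 1 <= `|G u - G v|) :
    {ae P, forall w, forall N, exists j, (N <= j)%N /\ pat (Lam w) (G j)}.
  rewrite /prop_near1 /nbhs /= /almost_everywhere.
  apply: negligibleS; last first.
    have hN := fun N => @tail_null R dT T P Lam lam lam0 Hm HJ G sG N.
    exact: (negligible_bigcup hN).
  move=> w /= nH; apply: contrapT => hnot; apply: nH => N.
  apply: contrapT => hnj; apply: hnot; exists N => //= j pj.
  by apply: hnj; exists (N + j)%N; split => //; apply: leq_addr.
have hR := tail _ (@sepR R).
have hL := tail _ (@sepL R).
near=> w.
apply: no_perc.
- exact: (near Hhard w).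
- exact: (near hR w).
- exact: (near hL w).
Unshelve. all: by end_near.
Qed.
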